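(* $rx_3(K_{2,t})=4$ for every $5\leq t\leq 8$, and $rx_3(K_{2,t})\geq 5$ for every $t\geq 9$.
   Context: An edge coloring of a graph $G$ is any assignment of colors to the edges (adjacent edges may receive the same color). A tree $T$ in an edge-colored graph is a rainbow tree if no two edges of $T$ have the same color. For $S\subseteq V(G)$, an $S$-tree is a subtree of $G$ containing all vertices of $S$. A $3$-rainbow coloring of $G$ is an edge coloring such that for every set $S$ of $3$ vertices of $G$ there is a rainbow $S$-tree in $G$. The $3$-rainbow index $rx_3(G)$ is the minimum number of colors in a $3$-rainbow coloring of $G$. $K_{2,t}$ denotes the complete bipartite graph with parts of sizes $2$ and $t$. *)

(* Defs.v *)
From mathcomp Require Import all_boot.
Set Implicit Arguments. Unset Strict Implicit. Unset Printing Implicit Defensive.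

Section Graphs.
Variable V : finType.
(* A simple graph is given by an (irreflexive, symmetric) adjacency relation. *)
Variable adj : rel V.

Definition edges : {set {set V}} :=
  [set e : {set V} | [exists x, exists y, adj x y && (e == [set x; y])]].

Definition frel (F : {set {set V}}) : rel V := fun x y => [set x; y] \in F.

(* (U, F) is a tree in the graph: a subgraph (F edges of G, with endpoints in
   U), nonempty, connected, and acyclic (every edge of F is a bridge, i.e.
   its endpoints are disconnected once it is removed). *)
Definition is_tree (U : {set V}) (F : {set {set V}}) : Prop :=
  [/\ F \subset edges,
      (forall e, e \in F -> e \subset U),
      U != set0,
      (forall x y, x \in U -> y \in U -> connect (frel F) x y) &
      (forall e x y, e \in F -> e = [set x; y] ->
           ~~ connect (frel (F :\ e)) x y)].

(* An edge coloring with (at most) k colors (only its values on edges matter)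
   is a 3-rainbow coloring if every 3-vertex set S lies in a rainbow tree. *)
Definition three_rainbow (k : nat) (c : {set V} -> 'I_k) : Prop :=
  forall S : {set V}, #|S| = 3 ->
    exists U F, [/\ is_tree U F, S \subset U & {in F &, injective c}].

Definition has_3rc (k : nat) : Prop := exists c : {set V} -> 'I_k, three_rainbow c.

Definition rx3_eq (k : nat) : Prop := has_3rc k /\ forall j, j < k -> ~ has_3rc j.

Definition rx3_ge (k : nat) : Prop := forall j, j < k -> ~ has_3rc j.

End Graphs.

Definition K2t_adj (t : nat) : rel ('I_2 + 'I_t)%type :=
  fun x y => match x, y with
             | inl _, inr _ | inr _, inl _ => true
             | _, _ => false
             end.
Arguments K2t_adj t : clear implicits.

(* Main.v *)
Require Import Defs.
From mathcomp Require Import all_boot zify.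
Set Implicit Arguments. Unset Strict Implicit. Unset Printing Implicit Defensive.

Definition dist3 (a b c : nat) := [&& a != b, a != c & b != c].
Definition dist4 (a b c d : nat) := [&& a != b, a != c, a != d, b != c, b != d & c != d].
Definition cen (y x z : nat * nat) :=
  [|| dist4 y.1 y.2 x.1 z.1, dist4 y.1 y.2 x.1 z.2, dist4 y.1 y.2 x.2 z.1 | dist4 y.1 y.2 x.2 z.2].
Definition good3 (x y z : nat * nat) :=
  [|| dist3 x.1 y.1 z.1, dist3 x.2 y.2 z.2, cen y x z, cen x y z | cen z x y].
Fixpoint okp (s : seq (nat*nat)) p :=
  if s is x :: s' then all (fun y => good3 x y p) s' && okp s' p else true.
Definition code (p : nat * nat) := p.1 * 16 + p.2.
Definition lep (x y : nat * nat) := code x <= code y.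
Fixpoint noextS (P : seq (nat*nat)) n s m :=
  if n is n'.+1 then all (fun p => if (m <= code p) && okp s p
                                   then noextS P n' (rcons s p) (code p) else true) P
  else false.
Definition PK K := [seq (x, y) | x <- iota 0 K, y <- iota 0 K].

Lemma search4 : noextS (PK 4) 9 [::] 0.
Proof. vm_compute. reflexivity. Qed.
Lemma search3 : noextS (PK 3) 5 [::] 0.
Proof. vm_compute. reflexivity. Qed.

Lemma okpP d s p :
  (forall i k, i < k -> k < size s -> good3 (nth d s i) (nth d s k) p) -> okp s p.
Proof.
elim: s => [|x s IH] //= H; apply/andP; split.
  apply/(all_nthP d) => k Hk; exact: (H 0 k.+1).
apply: IH => i k Hik Hk; exact: (H i.+1 k.+1).
Qed.

Lemma noextS_sound P d n : forall s m r, noextS P n s m -> size r = n ->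
  all (mem P) r -> sorted lep r -> all (fun p => m <= code p) r ->
  (forall i k l, i < k -> k < l -> l < size (s ++ r) ->
     good3 (nth d (s++r) i) (nth d (s++r) k) (nth d (s++r) l)) -> False.
Proof.
elim: n => [|n IH] s m [|p r] //= Hn [Hs] /andP[pP rP] Hsort /andP[mp mr] Hg.
have Hok : okp s p.
  apply: (@okpP d) => i k Hik Hk.
  have := Hg i k (size s) Hik Hk.
  rewrite size_cat /= addnS ltnS leq_addr => /(_ isT).
  by rewrite !nth_cat (ltn_trans Hik Hk) Hk ltnn subnn.
move/allP: Hn => /(_ p pP); rewrite mp Hok /= => Hn.
apply: (IH _ _ r Hn Hs rP (path_sorted Hsort)).
  by apply: (order_path_min _ Hsort) => x y z; exact: leq_trans.
by rewrite cat_rcons.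
Qed.

Lemma search_contra P (d : nat * nat) n (g : nat -> nat * nat) : noextS P n [::] 0 ->
  (forall m, m < n -> g m \in P) ->
  (forall i k l, i < n -> k < n -> l < n -> i != k -> i != l -> k != l ->
     good3 (g i) (g k) (g l)) -> False.
Proof.
move=> Hs HP Hg.
set r := mkseq g n.
have Hperm : perm_eq (sort lep r) r by rewrite perm_sort perm_refl.
have [Is HIs Er] := perm_iotaP d Hperm.
have HsIs : size Is = n by rewrite (perm_size HIs) size_iota size_mkseq.
have uIs : uniq Is by rewrite (perm_uniq HIs) iota_uniq.
have Ir : forall i, i < n -> nth 0 Is i < n.
  move=> i Hi; have : nth 0 Is i \in iota 0 (size r).
    by rewrite -(perm_mem HIs) mem_nth // HsIs.
  by rewrite mem_iota size_mkseq.
apply: (@noextS_sound P d n [::] 0 (sort lep r) Hs).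
- by rewrite size_sort size_mkseq.
- rewrite (perm_all _ Hperm); apply/allP => x /mapP [m]; rewrite mem_iota => /andP[_ Hm] ->.
  exact: HP.
- by apply: sort_sorted => x y; exact: leq_total.
- by apply/allP.
move=> i k l Hik Hkl; rewrite cat0s size_sort size_mkseq => Hl.
have Hk : k < n by apply: ltn_trans Hl.
have Hi : i < n by apply: ltn_trans Hk.
rewrite Er !(nth_map 0) ?HsIs //. rewrite ?size_iota ?Ir // !nth_iota ?Ir // !add0n.
apply: Hg; rewrite ?Ir //.
- by rewrite nth_uniq ?HsIs // (ltn_eqF Hik).
- by rewrite nth_uniq ?HsIs // (ltn_eqF (ltn_trans Hik Hkl)).
- by rewrite nth_uniq ?HsIs // (ltn_eqF Hkl).
all: by rewrite size_iota Ir.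
Qed.


Definition o0 : 'I_2 := ord0.
Definition o1 : 'I_2 := ord_max.
Lemma I2P (s : 'I_2) : s = o0 \/ s = o1.
Proof.
case: s => [[|[|m]] H].
- by left; apply/eqP.
- by right; apply/eqP.
- by [].
Qed.
Lemma o01 : o0 != o1. Proof. by []. Qed.

Section K2.
Variable t : nat.
Local Notation V := ('I_2 + 'I_t)%type.

Lemma edgesP (e : {set V}) : e \in edges (K2t_adj t) -> exists s w, e = [set inl s; inr w].
Proof.
rewrite inE => /existsP [x /existsP [y /andP [Hadj /eqP ->]]].
case: x y Hadj => [s|w] [s'|w'] //= _; first by exists s, w'.
by exists s', w; rewrite setUC.
Qed.

Lemma edges_in s w : [set inl s; inr w] \in edges (K2t_adj t).
Proof. rewrite inE; apply/existsP; exists (inl s).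
apply/existsP; exists (inr w); exact: eqxx.
Qed.

Lemma set2_eq (x y : V) s w : [set x; y] = [set inl s; inr w] ->
  (x = inl s /\ y = inr w) \/ (x = inr w /\ y = inl s).
Proof.
move=> E.
have hx : x \in [set inl s; inr w] by rewrite -E set21.
have hy : y \in [set inl s; inr w] by rewrite -E set22.
have hs : inl s \in [set x; y] by rewrite E set21.
have hw : inr w \in [set x; y] by rewrite E set22.
move: hx hy hs hw; rewrite !inE.
case/orP => /eqP -> ; case/orP => /eqP ->; rewrite ?eqxx //=; auto.
Qed.

Lemma set2_inj s w s' w' : [set inl s; inr w] = [set inl s'; inr w'] :> {set V} ->
  s = s' /\ w = w'.
Proof. by case/set2_eq => [[[->] [->]]|[]]. Qed.

End K2.


Lemma five_lt4 a b c d e : a != b -> a != c -> a != d -> a != e -> b != c -> b != d -> b != e ->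
  c != d -> c != e -> d != e -> a < 4 -> b < 4 -> c < 4 -> d < 4 -> e < 4 -> False.
Proof. move=> *; lia. Qed.

Section Nec.
Variables (t j : nat) (hj : j <= 4).
Local Notation V := ('I_2 + 'I_t)%type.
Variable c : {set V} -> 'I_j.
Hypothesis Hc : three_rainbow (K2t_adj t) c.

Definition col s w := nat_of_ord (c [set inl s; inr w]).
Definition pairOf w := (col o0 w, col o1 w).

Lemma card3 (x y z : V) : x != y -> x != z -> y != z -> #|[set x; y; z]| = 3.
Proof.
move=> Hxy Hxz Hyz; rewrite setUC !cardsU1 cards1 !inE.
by rewrite Hxy ![z == _]eq_sym (negbTE Hxz) (negbTE Hyz).
Qed.

Lemma nec i k l : i != k -> i != l -> k != l -> good3 (pairOf i) (pairOf k) (pairOf l).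
Proof.
move=> Hik Hil Hkl.
have := Hc (@card3 (inr i) (inr k) (inr l) Hik Hil Hkl).
case=> U [F [[Fe _ _ Hconn _] HSU Hinj]].
pose side s w := [set inl s; inr w] \in F.
have inUi : inr i \in U by apply: (subsetP HSU); rewrite !inE eqxx.
have inUk : inr k \in U by apply: (subsetP HSU); rewrite !inE eqxx orbT.
have inUl : inr l \in U by apply: (subsetP HSU); rewrite !inE eqxx !orbT.
have step : forall w w', w != w' -> inr w \in U -> inr w' \in U -> exists s, side s w.
  move=> w w' Hww' Hw Hw'; have /connectP [p Hp Hlast] := Hconn _ _ Hw Hw'.
  case: p Hp Hlast => [|v p] /=.
    by move=> _ [E]; rewrite E eqxx in Hww'.
  case/andP => Hv _ _.
  have [s [w0 E]] := edgesP (subsetP Fe _ Hv).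
  case: (set2_eq E) => [[]//|[[Ew] _]].
  by exists s; rewrite /side Ew -E.
have dc : forall s w s' w', side s w -> side s' w' -> (s != s') || (w != w') ->
    col s w != col s' w'.
  move=> s w s' w' H1 H2 Hd; apply/eqP => /val_inj/(Hinj _ _ H1 H2)/set2_inj [E1 E2].
  by rewrite E1 E2 !eqxx in Hd.
have dcw : forall s w s' w', side s w -> side s' w' -> w != w' -> col s w != col s' w'.
  by move=> s w s' w' H1 H2 H; apply: dc => //; rewrite H orbT.
have colb : forall s w, col s w < 4 by move=> s w; exact: leq_trans (ltn_ord _) hj.
have conn : forall w1 w2, inr w1 \in U -> inr w2 \in U -> side o0 w1 -> side o1 w2 ->
    exists ws, side o0 ws /\ side o1 ws.
  move=> w1 w2 H1 H2 S1 S2.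
  case: (boolP [exists ws, side o0 ws && side o1 ws]) => [/existsP [ws /andP[]]|Hno].
    by move=> *; exists ws.
  rewrite negb_exists in Hno; move/forallP: Hno => Hno.
  pose A := [pred v : V | match v with inl s => s == o0 | inr w => side o0 w end].
  have cl : closed (Defs.frel F) A.
    move=> x y Hxy; have [s [w E]] := edgesP (subsetP Fe _ Hxy).
    have Hs : side s w by rewrite /side -E.
    have Hn := Hno w.
    case: (set2_eq E) => [[-> ->]|[-> ->]] /=; case: (I2P s) => Es; subst s;
      rewrite /= ?Hs //; by move: Hn; rewrite Hs ?andbT => /negbTE.
  have := closed_connect cl (Hconn _ _ H1 H2); rewrite !inE /= => E2.
  by move: (Hno w2); rewrite -E2 S1 S2.
have cenP : forall y x z sx sz, y != x -> y != z -> x != z ->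
    side o0 y -> side o1 y -> side sx x -> side sz z ->
    cen (pairOf y) (pairOf x) (pairOf z).
  move=> y x z sx sz Hyx Hyz Hxz H0 H1 Hx Hz.
  have f1 := dc _ _ _ _ H0 H1 isT.
  have f2 := dcw _ _ _ _ H0 Hx Hyx.
  have f3 := dcw _ _ _ _ H0 Hz Hyz.
  have f4 := dcw _ _ _ _ H1 Hx Hyx.
  have f5 := dcw _ _ _ _ H1 Hz Hyz.
  have f6 := dcw _ _ _ _ Hx Hz Hxz.
  have D : dist4 (col o0 y) (col o1 y) (col sx x) (col sz z) by rewrite /dist4 f1 f2 f3 f4 f5 f6.
  case: (I2P sx) => Ex; case: (I2P sz) => Ez; subst sx sz; by rewrite /cen /pairOf /= D ?orbT.
have [si Hi] := step i k Hik inUi inUk.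
have [sk Hk] := step k i ltac:(by rewrite eq_sym) inUk inUi.
have [sl Hl] := step l i ltac:(by rewrite eq_sym) inUl inUi.
have mixed : forall w1 w2, inr w1 \in U -> inr w2 \in U -> side o0 w1 -> side o1 w2 ->
    good3 (pairOf i) (pairOf k) (pairOf l).
  move=> w1 w2 U1 U2 S1 S2; have [ws [W0 W1]] := conn _ _ U1 U2 S1 S2.
  case: (eqVneq ws i) => [E|Hwi]; first by subst ws; rewrite /good3 (cenP i k l sk sl) ?orbT.
  case: (eqVneq ws k) => [E|Hwk].
    by subst ws; rewrite /good3 (cenP k i l si sl) ?orbT // eq_sym.
  case: (eqVneq ws l) => [E|Hwl].
    by subst ws; rewrite /good3 (cenP l i k si sk) ?orbT // eq_sym.
  exfalso; apply: (@five_lt4 (col o0 ws) (col o1 ws) (col si i) (col sk k) (col sl l)); rewrite ?colb //.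
  - exact: dc W0 W1 isT.
  - exact: dcw.
  - exact: dcw.
  - exact: dcw.
  - exact: dcw.
  - exact: dcw.
  - exact: dcw.
  - exact: dcw.
  - exact: dcw.
  - exact: dcw.
case: (I2P si) => Es; case: (I2P sk) => Ek; case: (I2P sl) => El; subst si sk sl;
  try (by rewrite /good3 /pairOf /= /dist3 (dcw _ _ _ _ Hi Hk Hik) (dcw _ _ _ _ Hi Hl Hil)
        (dcw _ _ _ _ Hk Hl Hkl) ?orbT);
  first [ exact: (mixed i k) | exact: (mixed i l) | exact: (mixed k i)
        | exact: (mixed k l) | exact: (mixed l i) | exact: (mixed l k) ].
Qed.
End Nec.


Lemma lower (t j K n : nat) : j <= K -> K <= 4 -> n <= t -> noextS (PK K) n [::] 0 ->
  ~ has_3rc (K2t_adj t) j.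
Proof.
move=> hjK hK hnt Hs [c Hc].
have hj : j <= 4 by apply: leq_trans hK.
case: t hnt c Hc => [|t'] hnt c Hc.
  by move: hnt; rewrite leqn0 => /eqP Hn; subst n.
pose g m := pairOf c (inord m : 'I_t'.+1).
apply: (@search_contra (PK K) (0,0) n g Hs).
  move=> m _; rewrite /g /pairOf; apply: allpairs_f; rewrite mem_iota /= add0n;
  exact: leq_trans (ltn_ord _) hjK.
move=> i k l Hi Hk Hl Hik Hil Hkl; rewrite /g; apply: nec => //.
- by apply/eqP => /(congr1 val); rewrite /= !inordK; [apply/eqP|lia|lia].
- by apply/eqP => /(congr1 val); rewrite /= !inordK; [apply/eqP|lia|lia].
- by apply/eqP => /(congr1 val); rewrite /= !inordK; [apply/eqP|lia|lia].
Qed.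


Section Tree.
Variable t : nat.
Local Notation V := ('I_2 + 'I_t)%type.
Variable Wf : 'I_2 -> {set 'I_t}.

Definition FW : {set {set V}} :=
  [set e | [exists p : 'I_2 * 'I_t, (p.2 \in Wf p.1) && (e == [set inl p.1; inr p.2])]].
Definition UW : {set V} :=
  [set v | match v with inl s => [exists w, w \in Wf s] | inr w => (w \in Wf o0) || (w \in Wf o1) end].

Lemma FWP e : e \in FW -> exists s w, w \in Wf s /\ e = [set inl s; inr w].
Proof. by rewrite inE => /existsP [[s w] /andP [H /eqP ->]]; exists s, w. Qed.

Lemma inFW s w : ([set inl s; inr w] \in FW) = (w \in Wf s).
Proof.
apply/idP/idP => [/FWP [s' [w' [H E]]]|H].
  by case: (set2_inj E) => -> ->.
by rewrite inE; apply/existsP; exists (s, w); rewrite H eqxx.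
Qed.

Lemma frelW (x y : V) : Defs.frel FW x y =
  match x, y with inl s, inr w => w \in Wf s | inr w, inl s => w \in Wf s | _, _ => false end.
Proof.
rewrite /Defs.frel; case: x => [s|w]; case: y => [s'|w'].
- by apply/negP => /FWP [s0 [w0 [_ E]]]; case: (set2_eq E) => [[_ ]|[]].
- exact: inFW.
- by rewrite setUC inFW.
- by apply/negP => /FWP [s0 [w0 [_ E]]]; case: (set2_eq E) => [[]|[_ ]].
Qed.

Lemma UW_inl s : (inl s \in UW) = [exists w, w \in Wf s].
Proof. by rewrite inE. Qed.
Lemma UW_inr w : (inr w \in UW) = (w \in Wf o0) || (w \in Wf o1).
Proof. by rewrite inE. Qed.

Local Notation cW := (connect (Defs.frel FW)).

Lemma cW1 s w : w \in Wf s -> cW (inl s) (inr w) /\ cW (inr w) (inl s).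
Proof. by move=> H; split; apply: connect1; rewrite frelW. Qed.

Lemma hub_conn h : (forall v, v \in UW -> cW v h /\ cW h v) ->
  forall x y, x \in UW -> y \in UW -> cW x y.
Proof.
move=> H x y Hx Hy; apply: connect_trans (proj1 (H x Hx)) (proj2 (H y Hy)).
Qed.

Definition oth (s : 'I_2) : 'I_2 := if s == o0 then o1 else o0.
Lemma oth_neq s : s != oth s. Proof. by case: (I2P s) => ->. Qed.
Lemma oth_eq s s2 : s2 != s -> s2 = oth s.
Proof. by case: (I2P s) => ->; case: (I2P s2) => ->. Qed.

Hypothesis Hne : exists s w, w \in Wf s.
Hypothesis Huniq : forall w w', w \in Wf o0 -> w \in Wf o1 -> w' \in Wf o0 -> w' \in Wf o1 -> w = w'.
Hypothesis Hcon : (exists w, w \in Wf o0 /\ w \in Wf o1) \/ (forall w, w \notin Wf o1) \/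
                  (forall w, w \notin Wf o0).

Lemma Huniq2 s w w' : w \in Wf s -> w \in Wf (oth s) -> w' \in Wf s -> w' \in Wf (oth s) -> w = w'.
Proof. by case: (I2P s) => -> /= *; apply: Huniq. Qed.

Lemma conn_all x y : x \in UW -> y \in UW -> cW x y.
Proof.
case: Hcon => [[ws [W0 W1]]|[H1|H0]].
- apply: (hub_conn (h := inl o0)) => -[s|w].
    case: (I2P s) => -> _; first by split; exact: connect0.
    have [A1 A2] := cW1 W0; have [B1 B2] := cW1 W1.
    by split; [apply: connect_trans B1 A2 | apply: connect_trans A1 B2].
  rewrite UW_inr => /orP [H|H]; first by have [? ?] := cW1 H; split.
  have [A1 A2] := cW1 W0; have [B1 B2] := cW1 W1; have [C1 C2] := cW1 H.
  split; first by apply: connect_trans C2 (connect_trans B1 A2).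
  by apply: connect_trans A1 (connect_trans B2 C1).
- apply: (hub_conn (h := inl o0)) => -[s|w].
    case: (I2P s) => ->; first by split; exact: connect0.
    by rewrite UW_inl => /existsP [w]; rewrite (negbTE (H1 w)).
  by rewrite UW_inr (negbTE (H1 w)) orbF => H; have [? ?] := cW1 H; split.
- apply: (hub_conn (h := inl o1)) => -[s|w].
    case: (I2P s) => ->; last by split; exact: connect0.
    by rewrite UW_inl => /existsP [w]; rewrite (negbTE (H0 w)).
  by rewrite UW_inr (negbTE (H0 w)) => H; have [? ?] := cW1 H; split.
Qed.

Lemma acyc s w : w \in Wf s -> exists A : pred V,
  closed (Defs.frel (FW :\ [set inl s; inr w])) A /\ (inl s \in A) != (inr w \in A).
Proof.
move=> Hw.
have edge_ne : forall u v, Defs.frel (FW :\ [set inl s; inr w]) u v ->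
    exists s2 w2, [/\ w2 \in Wf s2, (s2 != s) || (w2 != w) & [set u; v] = [set inl s2; inr w2]].
  move=> u v; rewrite /Defs.frel in_setD1 => /andP [Hne2 /FWP [s2 [w2 [H2 E]]]].
  exists s2, w2; split => //.
  case: (eqVneq s2 s) => [E1|//]; case: (eqVneq w2 w) => [E2|]; last by rewrite orbT.
  by rewrite E E1 E2 eqxx in Hne2.
case: (boolP (w \in Wf (oth s))) => Ho.
- exists [pred v : V | match v with inl s2 => s2 == s | inr w2 => (w2 \in Wf s) && (w2 != w) end].
  split; last by rewrite !inE /= !eqxx andbF.
  move=> u v /edge_ne [s2 [w2 [H2 Hd E]]].
  case: (set2_eq E) => -[-> ->]; rewrite !inE /=.
  + case: (eqVneq s2 s) => [Es|Ns].
      by subst s2; move: Hd; rewrite eqxx /= => ->; rewrite H2.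
    rewrite (oth_eq Ns) in H2; apply/esym/negbTE/negP => /andP [H3 H4].
    by move/eqP: H4; apply; apply: (Huniq2 H3 H2 Hw Ho).
  + case: (eqVneq s2 s) => [Es|Ns].
      by subst s2; move: Hd; rewrite eqxx /= => ->; rewrite H2.
    rewrite (oth_eq Ns) in H2; apply/negbTE/negP => /andP [H3 H4].
    by move/eqP: H4; apply; apply: (Huniq2 H3 H2 Hw Ho).
- exists (pred1 (inr w)); split; last by rewrite !inE /= !eqxx.
  move=> u v /edge_ne [s2 [w2 [H2 Hd E]]].
  have Nw : w2 != w.
    apply/eqP => Ew; subst w2; move: Hd; rewrite eqxx orbF => Ns.
    by rewrite (oth_eq Ns) in H2; rewrite H2 in Ho.
  have F1 : (inr w2 == inr w :> V) = false by apply/eqP => -[Ew]; rewrite Ew eqxx in Nw.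
  by case: (set2_eq E) => -[-> ->]; rewrite !inE F1.
Qed.

Lemma treeW : is_tree (K2t_adj t) UW FW.
Proof.
split.
- by apply/subsetP => e /FWP [s [w [_ ->]]]; exact: edges_in.
- move=> e /FWP [s [w [H ->]]]; apply/subsetP => v; rewrite !inE => /orP [] /eqP ->.
    by apply/existsP; exists w.
  by case: (I2P s) H => -> ->; rewrite ?orbT.
- by case: Hne => s [w H]; apply/set0Pn; exists (inl s); rewrite UW_inl; apply/existsP; exists w.
- exact: conn_all.
- move=> e x y /FWP [s [w [H ->]]] E.
  have [A [cl Hd]] := acyc H.
  apply/negP => /(closed_connect cl) Exy.
  by case: (set2_eq (esym E)) => -[Ex Ey]; move: Hd; rewrite -Ex -Ey Exy ?eqxx.
Qed.

End Tree.


Lemma uniq_map_eq (T U : eqType) (f : T -> U) (s : seq T) x y :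
  uniq (map f s) -> x \in s -> y \in s -> f x = f y -> x = y.
Proof.
elim: s => [|z s IH] //= /andP [Hz Hu]; rewrite !inE.
case/orP => [/eqP ->|Hx]; case/orP => [/eqP ->|Hy] // E.
- by move: Hz; rewrite E map_f.
- by move: Hz; rewrite -E map_f.
- exact: IH.
Qed.

Definition cond2n (ci ck oi ok : nat) := [|| ci != ck, dist3 ci oi ok | dist3 ck ok oi].

Section Suf.
Variable t : nat.
Local Notation V := ('I_2 + 'I_t)%type.
Variables a b : 'I_t -> nat.
Hypothesis ha : forall w, a w < 4.
Hypothesis hb : forall w, b w < 4.

Definition colS (s : 'I_2) w := if s == o0 then a w else b w.
Lemma o10 : (o1 == o0) = false. Proof. by []. Qed.
Lemma colS0 w : colS o0 w = a w. Proof. by []. Qed.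
Lemma colS1 w : colS o1 w = b w. Proof. by []. Qed.
Lemma colS_lt s w : colS s w < 4. Proof. by rewrite /colS; case: ifP. Qed.

Definition cS (e : {set V}) : 'I_4 :=
  if [pick p : 'I_2 * 'I_t | e == [set inl p.1; inr p.2]] is Some p
  then inord (colS p.1 p.2) else ord0.

Lemma cE s w : nat_of_ord (cS [set inl s; inr w]) = colS s w.
Proof.
rewrite /cS; case: pickP => [[s' w'] /eqP /= E | H].
  by case: (set2_inj E) => -> ->; rewrite inordK // colS_lt.
by have := H (s, w); rewrite /= eqxx.
Qed.

Definition cover (S : {set V}) :=
  exists U F, [/\ is_tree (K2t_adj t) U F, S \subset U & {in F &, injective cS}].

Lemma cover_sub (S1 S2 : {set V}) : cover S1 -> S2 \subset S1 -> cover S2.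
Proof.
case=> U [F [HT HS HI]] H; exists U, F; split => //; exact: subset_trans H HS.
Qed.

Lemma rain_supp (Wf : 'I_2 -> {set 'I_t}) supp :
  uniq [seq colS p.1 p.2 | p <- supp] -> (forall s w, w \in Wf s -> (s, w) \in supp) ->
  {in FW Wf &, injective cS}.
Proof.
move=> Hu Hs e1 e2 /FWP [s [w [H1 ->]]] /FWP [s' [w' [H2 ->]]] /(congr1 (@nat_of_ord 4)).
rewrite !cE => E.
by have [-> ->] := uniq_map_eq Hu (Hs _ _ H1) (Hs _ _ H2) E.
Qed.

Lemma star s (L : seq 'I_t) (S : {set V}) : L != [::] -> uniq (map (colS s) L) ->
  (forall v, v \in S -> v = inl s \/ exists2 w, w \in L & v = inr w) -> cover S.
Proof.
case: L => [//|w0 L] _ Hu HS.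
pose Wf := fun s' : 'I_2 => if s' == s then [set w in w0 :: L] else set0.
have HW : forall s' w, w \in Wf s' -> s' = s /\ w \in w0 :: L.
  by move=> s' w; rewrite /Wf; case: eqP => [->|_]; rewrite ?in_set ?inE.
have HWs : forall w, w \in w0 :: L -> w \in Wf s by move=> w Hw; rewrite /Wf eqxx in_set.
have Hne : exists s w, w \in Wf s by exists s, w0; rewrite HWs // inE eqxx.
have Huniq : forall w w', w \in Wf o0 -> w \in Wf o1 -> w' \in Wf o0 -> w' \in Wf o1 -> w = w'.
  by move=> w w' /HW [E0 _] /HW [E1 _]; rewrite -E1 in E0.
have Hcon : (exists w, w \in Wf o0 /\ w \in Wf o1) \/ (forall w, w \notin Wf o1) \/
            (forall w, w \notin Wf o0).
  right; case: (I2P s) => Es; [left|right] => w; apply/negP => /HW [E _];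
  by rewrite Es in E.
exists (UW Wf), (FW Wf); split.
- exact: treeW.
- apply/subsetP => v /HS [->|[w Hw ->]].
    by rewrite UW_inl; apply/existsP; exists w0; rewrite HWs // inE eqxx.
  by rewrite UW_inr; case: (I2P s) (HWs _ Hw) => <- ->; rewrite ?orbT.
- apply: (@rain_supp Wf [seq (s, w) | w <- w0 :: L]).
    by rewrite -map_comp.
  by move=> s' w /HW [-> Hw]; rewrite map_f.
Qed.

Lemma center y (L0 L1 : seq 'I_t) (S : {set V}) :
  uniq (a y :: b y :: map a L0 ++ map b L1) -> (forall w, w \in L0 -> w \in L1 -> False) ->
  (forall v, v \in S -> [\/ v = inl o0, v = inl o1, v = inr y | exists2 w, w \in L0 ++ L1 & v = inr w]) ->
  cover S.
Proof.
move=> Hu Hd HS.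
pose Wf := fun s : 'I_2 => if s == o0 then y |: [set w in L0] else y |: [set w in L1].
have W0 : forall w, (w \in Wf o0) = (w == y) || (w \in L0) by move=> w; rewrite /Wf /= !inE.
have W1 : forall w, (w \in Wf o1) = (w == y) || (w \in L1) by move=> w; rewrite /Wf /= !inE.
have Hne : exists s w, w \in Wf s by exists o0, y; rewrite W0 eqxx.
have Huniq : forall w w', w \in Wf o0 -> w \in Wf o1 -> w' \in Wf o0 -> w' \in Wf o1 -> w = w'.
  have E : forall w, w \in Wf o0 -> w \in Wf o1 -> w = y.
    move=> w; rewrite W0 W1 => /orP [/eqP //|H0] /orP [/eqP //|H1].
    by case: (Hd _ H0 H1).
  by move=> w w' H1 H2 H3 H4; rewrite (E _ H1 H2) (E _ H3 H4).
have Hcon : (exists w, w \in Wf o0 /\ w \in Wf o1) \/ (forall w, w \notin Wf o1) \/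
            (forall w, w \notin Wf o0).
  by left; exists y; rewrite W0 W1 eqxx.
exists (UW Wf), (FW Wf); split.
- exact: treeW.
- apply/subsetP => v /HS [->|->|->|[w Hw ->]].
  + by rewrite UW_inl; apply/existsP; exists y; rewrite W0 eqxx.
  + by rewrite UW_inl; apply/existsP; exists y; rewrite W1 eqxx.
  + by rewrite UW_inr W0 eqxx.
  + by rewrite UW_inr W0 W1; move: Hw; rewrite mem_cat => /orP [] ->; rewrite ?orbT.
- apply: (@rain_supp Wf ((o0, y) :: (o1, y) :: [seq (o0, w) | w <- L0] ++ [seq (o1, w) | w <- L1])).
    by rewrite /= map_cat -!map_comp.
  move=> s w; case: (I2P s) => ->; rewrite ?W0 ?W1 !inE mem_cat => /orP [/eqP ->|H];
    rewrite ?eqxx ?orbT //.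
  + by rewrite (map_f (fun w0 => (o0, w0)) H) ?orbT.
  + by rewrite (map_f (fun w0 => (o1, w0)) H) ?orbT.
Qed.


Lemma d3u x y z : dist3 x y z -> uniq [:: x; y; z].
Proof. by rewrite /dist3 /= !inE; lia. Qed.

Lemma inr_sub (S : {set V}) (L : seq 'I_t) :
  (forall v, v \in S -> exists2 w, w \in L & v = inr w) ->
  forall v, v \in S -> exists2 w, w \in L & v = inr w.
Proof. by []. Qed.

Lemma cenC y x z (S : {set V}) : y != x -> y != z -> x != z ->
  cen (a y, b y) (a x, b x) (a z, b z) ->
  (forall v, v \in S -> [\/ v = inr x, v = inr y | v = inr z]) -> cover S.
Proof.
move=> Hyx Hyz Hxz D HS.
have hx : x \in [:: x; z] by rewrite !inE eqxx.
have hz : z \in [:: x; z] by rewrite !inE eqxx orbT.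
case/or4P: D => D.
- apply: (@center y [:: x; z] [::]) => //.
    by move: D; rewrite /dist4 /= !inE; lia.
  by move=> v /HS [->|->|->]; [apply: Or44; exists x | apply: Or43 | apply: Or44; exists z].
- apply: (@center y [:: x] [:: z]) => //.
    by move: D; rewrite /dist4 /= !inE; lia.
    by move=> w; rewrite !inE => /eqP -> /eqP E; rewrite E eqxx in Hxz.
  move=> v /HS [->|->|->]; [apply: Or44; exists x | apply: Or43 | apply: Or44; exists z] => //.
- apply: (@center y [:: z] [:: x]) => //.
    by move: D; rewrite /dist4 /= !inE; lia.
    by move=> w; rewrite !inE => /eqP -> /eqP E; rewrite E eqxx in Hxz.
  move=> v /HS [->|->|->]; [apply: Or44; exists x | apply: Or43 | apply: Or44; exists z] => //; by rewrite !inE eqxx ?orbT.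
- apply: (@center y [::] [:: x; z]) => //.
    by move: D; rewrite /dist4 /= !inE; lia.
  by move=> v /HS [->|->|->]; [apply: Or44; exists x | apply: Or43 | apply: Or44; exists z].
Qed.

Lemma cover_w i k l : i != k -> i != l -> k != l ->
  good3 (a i, b i) (a k, b k) (a l, b l) -> cover [set inr i; inr k; inr l].
Proof.
move=> Hik Hil Hkl.
have HS : forall v : V, v \in [set inr i; inr k; inr l] -> [\/ v = inr i, v = inr k | v = inr l].
  by move=> v; rewrite !inE => /orP [/orP [] |] /eqP ->; [apply: Or31|apply: Or32|apply: Or33].
case/orP => [D|/orP [D|/orP [D|/orP [D|D]]]].
- apply: (@star o0 [:: i; k; l]) => //; first exact: d3u.
  move=> v /HS [] ->; right; [exists i|exists k|exists l] => //; rewrite !inE eqxx ?orbT //.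
- apply: (@star o1 [:: i; k; l]) => //; first exact: d3u.
  move=> v /HS [] ->; right; [exists i|exists k|exists l] => //; rewrite !inE eqxx ?orbT //.
- by apply: (@cenC k i l) => //; rewrite eq_sym.
- apply: (@cenC i k l) => //.
  by move=> v /HS [] ->; [apply: Or32|apply: Or31|apply: Or33].
- apply: (@cenC l i k) => //; rewrite 1?eq_sym //.
  by move=> v /HS [] ->; [apply: Or31|apply: Or33|apply: Or32].
Qed.

Lemma cover_L s i k : i != k ->
  cond2n (colS s i) (colS s k) (colS (oth s) i) (colS (oth s) k) -> cover [set inl s; inr i; inr k].
Proof.
move=> Hik.
have HS : forall v : V, v \in [set inl s; inr i; inr k] -> [\/ v = inl s, v = inr i | v = inr k].
  by move=> v; rewrite !inE => /orP [/orP [] |] /eqP ->; [apply: Or31|apply: Or32|apply: Or33].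
have hi : i \in [:: i] by rewrite inE.
have hk : k \in [:: k] by rewrite inE.
case/or3P => D.
- apply: (@star s [:: i; k]) => //=; first by rewrite inE D.
  move=> v /HS [->|->|->]; [left| right; exists i | right; exists k] => //; rewrite !inE eqxx ?orbT //.
- case: (I2P s) D HS => -> D HS.
  + apply: (@center i [::] [:: k]) => //; first by move: D; rewrite /dist3 /oth /colS ?eqxx ?o10 /= !inE; lia.
    move=> v /HS [->|->|->]; [apply: Or41 | apply: Or43 | apply: Or44; exists k] => //.
  + apply: (@center i [:: k] [::]) => //; first by move: D; rewrite /dist3 /oth /colS ?eqxx ?o10 /= !inE; lia.
    move=> v /HS [->|->|->]; [apply: Or42 | apply: Or43 | apply: Or44; exists k] => //.
- case: (I2P s) D HS => -> D HS.
  + apply: (@center k [::] [:: i]) => //; first by move: D; rewrite /dist3 /oth /colS ?eqxx ?o10 /= !inE; lia.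
    move=> v /HS [->|->|->]; [apply: Or41 | apply: Or44; exists i | apply: Or43] => //.
  + apply: (@center k [:: i] [::]) => //; first by move: D; rewrite /dist3 /oth /colS ?eqxx ?o10 /= !inE; lia.
    move=> v /HS [->|->|->]; [apply: Or42 | apply: Or44; exists i | apply: Or43] => //.
Qed.

Lemma cover_LL i : a i != b i -> cover [set inl o0; inl o1; inr i].
Proof.
move=> D; apply: (@center i [::] [::]) => //=; first by rewrite inE D.
by move=> v; rewrite !inE => /orP [/orP [] |] /eqP ->; [apply: Or41|apply: Or42|apply: Or43].
Qed.

Lemma card3P (S : {set V}) : #|S| = 3 ->
  exists x y z, [/\ x != y, x != z, y != z & S = [set x; y; z]].
Proof.
move=> H; have /card_gt0P [x Hx] : 0 < #|S| by rewrite H.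
have H2 : #|S :\ x| == 2 by move: H; rewrite (cardsD1 x) Hx add1n => -[->].
case/cards2P: H2 => y [z [Hyz E]].
have Hy : y \in S :\ x by rewrite E !inE eqxx.
have Hz : z \in S :\ x by rewrite E !inE eqxx orbT.
exists x, y, z; split => //.
- by move: Hy; rewrite !inE eq_sym => /andP [].
- by move: Hz; rewrite !inE eq_sym => /andP [].
- by rewrite -(setD1K Hx) E setUA.
Qed.

Ltac subs := apply/subsetP => v; rewrite !inE => /orP [/orP [] | ] /eqP ->;
  by rewrite ?inE ?eqxx ?orbT.

Hypothesis Q1 : forall i k l, i != k -> i != l -> k != l -> good3 (a i, b i) (a k, b k) (a l, b l).
Hypothesis Q2 : forall s i k, i != k ->
  cond2n (colS s i) (colS s k) (colS (oth s) i) (colS (oth s) k).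
Hypothesis Q3 : forall i, a i != b i.

Lemma cover_all (S : {set V}) : #|S| = 3 -> cover S.
Proof.
case/card3P => x [y [z [Hxy Hxz Hyz ->]]].
case: x Hxy Hxz => [s1|i] Hxy Hxz; case: y Hxy Hyz => [s2|k] Hxy Hyz;
  case: z Hxz Hyz => [s3|l] Hxz Hyz.
- by move: Hxy Hxz Hyz; case: (I2P s1) => ->; case: (I2P s2) => ->; case: (I2P s3) => ->;
    rewrite ?eqxx.
- move: Hxy; case: (I2P s1) => ->; case: (I2P s2) => -> // _;
    apply: cover_sub (cover_LL (Q3 l)) _; subs.
- move: Hxz; case: (I2P s1) => ->; case: (I2P s3) => -> // _;
    apply: cover_sub (cover_LL (Q3 k)) _; subs.
- exact: cover_L Hyz (Q2 s1 Hyz).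
- move: Hyz; case: (I2P s2) => ->; case: (I2P s3) => -> // _;
    apply: cover_sub (cover_LL (Q3 i)) _; subs.
- by apply: cover_sub (cover_L Hxz (Q2 s2 Hxz)) _; subs.
- by apply: cover_sub (cover_L Hxy (Q2 s3 Hxy)) _; subs.
- by apply: cover_w; [exact: Hxy | exact: Hxz | exact: Hyz | exact: Q1].
Qed.

End Suf.


Definition L8 : seq (nat * nat) :=
  [:: (0,1); (0,2); (1,0); (1,3); (2,0); (2,3); (3,1); (3,2)].
Definition p8 n := nth (0,0) L8 n.
Definition chk1 T := all (fun i => all (fun k => all (fun l =>
  [|| i == k, i == l, k == l | good3 (p8 i) (p8 k) (p8 l)]) (iota 0 T)) (iota 0 T)) (iota 0 T).
Definition chk2 T := all (fun i => all (fun k =>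
  (i == k) || (cond2n (p8 i).1 (p8 k).1 (p8 i).2 (p8 k).2 &&
               cond2n (p8 i).2 (p8 k).2 (p8 i).1 (p8 k).1)) (iota 0 T)) (iota 0 T).
Definition chk3 T := all (fun i => (p8 i).1 != (p8 i).2) (iota 0 T).

Lemma chk_ok T : 5 <= T <= 8 -> [&& chk1 T, chk2 T & chk3 T].
Proof.
move=> H; have : T = 5 \/ T = 6 \/ T = 7 \/ T = 8 by lia.
by case=> [->|[->|[->|->]]]; vm_compute; reflexivity.
Qed.

Lemma p8_lt n : ((p8 n).1 < 4) && ((p8 n).2 < 4).
Proof. rewrite /p8 /L8; case: n => [|[|[|[|[|[|[|[|n]]]]]]]]; try reflexivity; by rewrite nth_default. Qed.

Theorem upper t : 5 <= t <= 8 -> has_3rc (K2t_adj t) 4.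
Proof.
move=> Ht; have /and3P [c1 c2 c3] := chk_ok Ht.
pose a := fun w : 'I_t => (p8 w).1.
pose b := fun w : 'I_t => (p8 w).2.
have ha : forall w, a w < 4 by move=> w; case/andP: (p8_lt w).
have hb : forall w, b w < 4 by move=> w; case/andP: (p8_lt w).
have mi : forall w : 'I_t, nat_of_ord w \in iota 0 t by move=> w; rewrite mem_iota /= add0n.
exists (cS a b) => S HS.
apply: (@cover_all t a b ha hb) => //.
- move=> i k l Hik Hil Hkl.
  have := allP (allP (allP c1 _ (mi i)) _ (mi k)) _ (mi l).
  have E1 : (nat_of_ord i == k) = false by exact: negbTE Hik.
  have E2 : (nat_of_ord i == l) = false by exact: negbTE Hil.
  have E3 : (nat_of_ord k == l) = false by exact: negbTE Hkl.
  by rewrite E1 E2 E3.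
- move=> s i k Hik.
  have := allP (allP c2 _ (mi i)) _ (mi k); have E1 : (nat_of_ord i == k) = false by exact: negbTE Hik.
  rewrite E1 /= => /andP [D1 D2].
  by case: (I2P s) => ->.
- by move=> i; exact: (allP c3 _ (mi i)).
Qed.

Theorem lemma4' :
  (forall t : nat, 5 <= t <= 8 -> rx3_eq (K2t_adj t) 4) /\
  (forall t : nat, 9 <= t -> rx3_ge (K2t_adj t) 5).
Proof.
split.
- move=> t Ht; split; first exact: upper.
  move=> j Hj; apply: (@lower t j 3 5); try lia; exact: search3.
- move=> t Ht j Hj; apply: (@lower t j 4 9); try lia; exact: search4.
Qed.

Theorem lemma4 :
  (forall t : nat, 5 <= t <= 8 -> rx3_eq (K2t_adj t) 4) /\
  (forall t : nat, 9 <= t -> rx3_ge (K2t_adj t) 5).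
Proof. exact: lemma4'. Qed.
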